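(* In the setting of the context, for each $s$ let $\sigma_{n,s}:\{1,\dots,n\}\to\{1,\dots,n\}$ be any permutation and define \[ Y^\ast_{ni}=\sum_{s=1}^{\mathcal{S}}\sum_{a\in\{0,1\}}Y_{\sigma_{n,s}(i)}(a,s)\mathbb{I}\{A_{ni}=a,\mathbb{S}(Z_i)=s\},\quad Z^\ast_{ni}=\sum_{s=1}^{\mathcal{S}}Z_{\sigma_{n,s}(i)}(s)\mathbb{I}\{\mathbb{S}(Z_i)=s\}, \] $X^\ast_{ni}=(Y^\ast_{ni},A_{ni},Z^\ast_{ni})$ and $\mathbf{X}^\ast_n=(X^\ast_{n1},\dots,X^\ast_{nn})'$. Then the joint distribution of $(\mathbf{X}^\ast_n,\mathbf{S}_n)$ equals that of $(\mathbf{X}_n,\mathbf{S}_n)$, and $\mathbf{X}_n$ and $\mathbf{X}^\ast_n$ are conditionally independent given $(\mathbf{A}_n,\mathbf{S}_n)$.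
   Context: Population: $W=(Y(0),Y(1),Z')'\in\mathbb{R}^{2+k}$; $\mathbf{Q}$ a family of distributions of $W$ each with a density w.r.t. a product of $\sigma$-finite measures $\mu_0\otimes\mu_1\otimes\mu_Z$ and $\mathbb{E}_Q[Y(a)^2]<\infty$; true $Q_0\in\mathbf{Q}$. Known measurable $\mathbb{S}:\mathbb{R}^k\to\{1,\dots,\mathcal{S}\}$, $\pi(s)\in(0,1)$. Sample $\mathbf{W}=\{W_i=(Y_i(0),Y_i(1),Z_i)\}_{i\in\mathbb{N}}$ i.i.d. $Q_0$; treatments $\mathbf{A}_n=(A_{n1},\dots,A_{nn})\in\{0,1\}^n$ for each $n$; $S_i=\mathbb{S}(Z_i)$, $\mathbf{S}_n=(S_1,\dots,S_n)$; observed $X_{ni}=(Y_{ni},A_{ni},Z_i)$ with $Y_{ni}=Y_i(1)A_{ni}+Y_i(0)(1-A_{ni})$, $\mathbf{X}_n=(X_{n1},\dots,X_{nn})'$; $(W_1,\dots,W_n)$ and $\mathbf{A}_n$ conditionally independent given $\mathbf{S}_n$; $\Pr(\mathbf{A}_n=\mathbf{a}\mid\mathbf{S}_n=\mathbf{s})$ known and not depending on $Q_0$; $N_n(1,s)/N_n(s)\to\pi(s)$ in probability. Coupling construction: $\mathbf{W}^\ast=\{W_i(s)=(Y_i(0,s),Y_i(1,s),Z_i(s)'):i\in\mathbb{N},s\in\{1,\dots,\mathcal{S}\}\}$ is a collection of random vectors on the same probability space, independent across $(i,s)$, with $W_i(s)$ distributed as $W$ conditional on $\mathbb{S}(Z)=s$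 under $Q_0$, and $\mathbf{W}^\ast$ independent of $\mathbf{W}$ and of all $\mathbf{A}_n$, $n\in\mathbb{N}$. *)

(* Defs.v *)
From HB Require Import structures.
From mathcomp Require Import all_boot all_order all_algebra all_fingroup.
From mathcomp Require Import all_classical all_reals all_analysis measurable_realfun.
Set Implicit Arguments.
Unset Strict Implicit.
Unset Printing Implicit Defensive.
Import Order.TTheory GRing.Theory Num.Theory.
Local Open Scope classical_set_scope.
Local Open Scope ring_scope.

Section prob_defs.
Context {d : measure_display} {T : measurableType d} {R : realType}.
Variable P : probability T R.

Definition preim_sys {d'} {U : measurableType d'} (X : T -> U) : set (set T) :=
  [set X @^-1` B | B in measurable].

Definition gen_sys {I : Type} (D : set I) (F : I -> set (set T)) : set (set T) :=
  <<s \bigcup_(i in D) F i >>.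

Definition mutual_indep {I : eqType} (D : pred I) (F : I -> set (set T)) :=
  forall (J : seq I) (E : I -> set T), uniq J -> all D J ->
  (forall j, j \in J -> F j (E j)) ->
  P (\big[setI/setT]_(j <- J) E j) = (\prod_(j <- J) P (E j))%E.

Definition indep2 (F G : set (set T)) :=
  forall E1 E2, F E1 -> G E2 -> P (E1 `&` E2) = (P E1 * P E2)%E.

(** conditional independence of [F] and [G] given a discrete (finitely valued)
    random element [C]: for every value [c] of [C],
    P(E1 E2 | C = c) = P(E1 | C = c) P(E2 | C = c), written multiplicatively
    (vacuous on null atoms). *)
Definition cond_indep_disc {U : Type} (F G : set (set T)) (C : T -> U) :=
  forall (c : U) E1 E2, F E1 -> G E2 ->
  (P (E1 `&` E2 `&` (C @^-1` [set c])) * P (C @^-1` [set c])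
   = P (E1 `&` (C @^-1` [set c])) * P (E2 `&` (C @^-1` [set c])))%E.

Definition same_law {d'} {U : measurableType d'} (X X' : T -> U) :=
  forall B, measurable B -> P (X @^-1` B) = P (X' @^-1` B).

End prob_defs.

(** A unit is W = (Y(0), Y(1), Z) : R * R * k.-tuple R, i.e. [w.1.1 = Y(0)],
    [w.1.2 = Y(1)], [w.2 = Z].  Sample indices are 0-based ([i : 'I_n] is the
    paper's unit i+1); strata are the natural numbers 1..Sc. *)
Section model_defs.
Context {d : measure_display} {T : measurableType d} {R : realType} {k : nat}.
Variables (Sf : k.-tuple R -> nat) (W : nat -> T -> R * R * k.-tuple R)
          (A : forall n, T -> n.-tuple bool).

Definition Svec n : T -> n.-tuple nat := fun t => [tuple Sf (W i t).2 | i < n].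

Definition Xobs n : T -> n.-tuple (R * bool * k.-tuple R) := fun t =>
  [tuple let a := tnth (A n t) i in
         ((W i t).1.2 * (a : nat)%:R + (W i t).1.1 * (1 - (a : nat)%:R), a,
          (W i t).2) | i < n].

Definition N1 n (s : nat) (t : T) : nat :=
  \sum_(i < n) (tnth (A n t) i && (Sf (W i t).2 == s)).
Definition Ns n (s : nat) (t : T) : nat :=
  \sum_(i < n) (Sf (W i t).2 == s).

(** coupled sample: [Wst i s] = W_i(s) = (Y_i(0,s), Y_i(1,s), Z_i(s)) *)
Variables (Sc : nat) (Wst : nat -> nat -> T -> R * R * k.-tuple R).

Definition Ycp (i s : nat) (a : bool) (t : T) : R :=
  if a then (Wst i s t).1.2 else (Wst i s t).1.1.

Definition Xstar n (sig : nat -> {perm 'I_n}) : T -> n.-tuple (R * bool * k.-tuple R) :=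
  fun t =>
  [tuple let a := tnth (A n t) i in let si := Sf (W i t).2 in
     (\sum_(1 <= s < Sc.+1) \sum_(b : bool)
         Ycp (sig s i) s b t * ((a == b) && (si == s) : nat)%:R,
      a,
      [tuple \sum_(1 <= s < Sc.+1)
               tnth (Wst (sig s i) s t).2 j * ((si == s) : nat)%:R | j < k])
   | i < n].

End model_defs.

(* Main.v *)
Require Import Defs.
From HB Require Import structures.
From mathcomp Require Import all_boot all_order all_algebra all_fingroup.
From mathcomp Require Import all_classical all_reals all_analysis measurable_realfun.
From mathcomp Require Import lra.
Import Order.TTheory GRing.Theory Num.Theory.
Local Open Scope classical_set_scope.
Local Open Scope ring_scope.
Unset Printing Implicit Defensive.


Lemma bigI_seq (T : Type) (I : eqType) (s : seq I) (E : I -> set T) x :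
  (\big[setI/setT]_(j <- s) E j) x <-> (forall j, j \in s -> E j x).
Proof.
elim: s => [|j s IH]; first by rewrite big_nil; split.
rewrite big_cons; split.
  by move=> [Ej /IH H] j'; rewrite inE => /orP[/eqP->|/H].
by move=> H; split; [apply: H; rewrite inE eqxx|apply/IH => j' h; apply: H; rewrite inE h orbT].
Qed.

Lemma bigI_ord (T : Type) m (E : 'I_m -> set T) x :
  (\big[setI/setT]_(i < m) E i) x <-> (forall i, E i x).
Proof.
rewrite bigI_seq; split => [H i|H j _]; last exact: H.
by apply: H; rewrite mem_index_enum.
Qed.

Lemma bigU_seq (T : Type) (I : eqType) (s : seq I) (E : I -> set T) x :
  (\big[setU/set0]_(j <- s) E j) x <-> (exists j, j \in s /\ E j x).
Proof.
elim: s => [|j s IH]; first by rewrite big_nil; split => [//|[j []]]; rewrite in_nil.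
rewrite big_cons; split.
  by move=> [Ej|/IH [j' [H1 H2]]]; [exists j; rewrite inE eqxx|exists j'; rewrite inE H1 orbT].
by move=> [j' []]; rewrite inE => /orP[/eqP->|H1] H2; [left|right; apply/IH; exists j'].
Qed.

Lemma indep_big d (T : measurableType d) (R : realType) (P : probability T R)
  (I : eqType) (D : pred I) (F : I -> set (set T)) m (pr : 'I_m -> I)
  (E : 'I_m -> set T) :
  mutual_indep P D F -> injective pr -> (forall i, D (pr i)) ->
  (forall i, F (pr i) (E i)) ->
  P (\big[setI/setT]_(i < m) E i) = (\prod_(i < m) P (E i))%E.
Proof.
move=> H prI DP FE.
pose E' x := if [pick i | pr i == x] is Some i then E i else setT.
have E'E i : E' (pr i) = E i.
  rewrite /E'; case: pickP => [j /eqP/prI -> //|/(_ i)].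
  by rewrite eqxx.
have := H (map pr (index_enum 'I_m)) E' _ _ _.
- rewrite !big_map.
  have -> : \big[setI/setT]_(i <- index_enum 'I_m) E' (pr i) = \big[setI/setT]_(i < m) E i.
    by apply: eq_bigr => i _; exact: E'E.
  have -> : (\prod_(i <- index_enum 'I_m) P (E' (pr i)) = \prod_(i < m) P (E i))%E.
    by apply: eq_bigr => i _; rewrite E'E.
  apply.
  - by rewrite map_inj_uniq // index_enum_uniq.
  - by apply/allP => x /mapP [i _ ->].
  - by move=> x /mapP [i _ ->]; rewrite E'E.
Qed.

Section model.
Context (R : realType) (d : measure_display) (T : measurableType d)
  (P : probability T R) (k Sc : nat) (Sf : k.-tuple R -> nat)
  (W : nat -> T -> R * R * k.-tuple R) (A : forall n, T -> n.-tuple bool)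
  (Wst : nat -> nat -> T -> R * R * k.-tuple R).
Hypothesis SfR : forall z, (1 <= Sf z <= Sc)%N.

Local Notation U := (R * R * k.-tuple R)%type.
Local Notation V := (R * bool * k.-tuple R)%type.

Definition hx (b : bool) (w : U) : V := (if b then w.1.2 else w.1.1, b, w.2).

Lemma hx_meas b : measurable_fun setT (hx b).
Proof.
apply/measurable_fun_pairP; split; last exact: measurable_snd.
apply/measurable_fun_pairP; split; last exact: measurable_cst.
case: b => /=.
  exact: (measurableT_comp measurable_snd measurable_fst).
exact: (measurableT_comp measurable_fst measurable_fst).
Qed.

Lemma tnth_Xobs n t i : tnth (Xobs W A n t) i = hx (tnth (A n t) i) (W i t).
Proof.
rewrite /Xobs tnth_mktuple /hx.
case: (tnth (A n t) i) => /=; congr (_, _, _); rewrite ?mulr1n ?mulr0n; lra.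
Qed.

Lemma sum_ind (F : nat -> R) c : (1 <= c <= Sc)%N ->
  \sum_(1 <= s < Sc.+1) F s * ((c == s) : nat)%:R = F c.
Proof.
move=> cS.
rewrite (bigD1_seq c) ?mem_index_iota ?iota_uniq //= eqxx mulr1 big1_seq ?addr0 //.
by move=> s /andP[sc _]; rewrite eq_sym (negbTE sc) mulr0.
Qed.

Lemma tnth_Xstar n sig t i :
  tnth (Xstar Sf W A Sc Wst sig t) i =
  hx (tnth (A n t) i) (Wst (sig (Sf (W i t).2) i) (Sf (W i t).2) t).
Proof.
rewrite /Xstar tnth_mktuple /hx; congr (_, _, _).
  rewrite -(sum_ind (fun s => if tnth (A n t) i then (Wst (sig s i) s t).1.2 else (Wst (sig s i) s t).1.1) _ (SfR (W i t).2)).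
  apply: eq_bigr => s _; rewrite big_bool /= /Ycp.
  case: (tnth (A n t) i) => /=; rewrite ?andbT ?andbF ?mulr0 ?addr0 ?add0r //.
apply: eq_from_tnth => j; rewrite tnth_mktuple.
by rewrite (sum_ind (fun s => tnth (Wst (sig s i) s t).2 j) _ (SfR _)).
Qed.

Lemma mpre d1 d2 (T1 : measurableType d1) (T2 : measurableType d2) (f : T1 -> T2) Y :
  measurable_fun setT f -> measurable Y -> measurable (f @^-1` Y).
Proof. by move=> mf mY; rewrite -[X in measurable X]setTI; exact: mf. Qed.
Arguments mpre {d1 d2 T1 T2 f Y}.

Hypothesis mSf : measurable_fun setT Sf.
Hypothesis mW : forall i, measurable_fun setT (W i).
Hypothesis mA : forall n, measurable_fun setT (A n).
Hypothesis mWst : forall i s, measurable_fun setT (Wst i s).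

Definition GWA : set (set T) := \bigcup_(x in setT) (fun x : nat + nat =>
       match x with inl i => preim_sys (W i) | inr n => preim_sys (A n) end) x.
Definition TWA := g_sigma_algebraType GWA.
Definition GWst : set (set T) := \bigcup_(p in [set p : nat * nat | (1 <= p.2 <= Sc)%N])
  (fun p => preim_sys (Wst p.1 p.2)) p.
Definition TWst := g_sigma_algebraType GWst.

Lemma mW_WA i : measurable_fun (setT : set TWA) (W i : TWA -> U).
Proof.
move=> _ Y mY; rewrite setTI; apply: sub_sigma_algebra.
by exists (inl i) => //; exists Y.
Qed.

Lemma mA_WA n : measurable_fun (setT : set TWA) (A n : TWA -> _).
Proof.
move=> _ Y mY; rewrite setTI; apply: sub_sigma_algebra.
by exists (inr n) => //; exists Y.
Qed.

Lemma mWst_W i s : (1 <= s <= Sc)%N -> measurable_fun (setT : set TWst) (Wst i s : TWst -> U).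
Proof.
move=> hs _ Y mY; rewrite setTI; apply: sub_sigma_algebra.
by exists (i, s) => //; exists Y.
Qed.

Lemma WA_sub (E : set T) : (measurable : set (set TWA)) E -> measurable E.
Proof.
apply: smallest_sub; first exact: sigma_algebra_measurable.
move=> _ [[i|n] _ [Y mY <-]]. exact: (mpre (mW i) mY). apply: mpre; [exact: mA| exact: mY]. Qed.

Lemma Wst_sub (E : set T) : (measurable : set (set TWst)) E -> measurable E.
Proof.
apply: smallest_sub; first exact: sigma_algebra_measurable.
by move=> _ [p _ [Y mY <-]]; exact: (mpre (mWst _ _) mY).
Qed.

Lemma mSfsnd : measurable_fun setT (fun w : U => Sf w.2).
Proof. exact: measurableT_comp mSf measurable_snd. Qed.

Lemma tuple_set1 m (T0 : Type) (a : m.-tuple T0) :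
  [set a] = \big[setI/setT]_(i < m) (fun x : m.-tuple T0 => tnth x i) @^-1` [set tnth a i].
Proof.
apply/seteqP; split => x.
  by move=> /= ->; apply/bigI_ord.
by move/bigI_ord => H; apply: eq_from_tnth => i; exact: H.
Qed.

Definition Cset n (a : n.-tuple bool) (c : n.-tuple nat) : set T :=
  [set t | A n t = a /\ Svec Sf W n t = c].

Lemma Cset_eq n (a : n.-tuple bool) (c : n.-tuple nat) : Cset n a c = A n @^-1` [set a] `&`
  \big[setI/setT]_(i < n) W i @^-1` [set w | Sf w.2 = tnth c i].
Proof.
apply/seteqP; split => t.
  move=> [Ha Hc]; split; first exact: Ha.
  by apply/bigI_ord => i /=; rewrite -Hc /Svec tnth_mktuple.
move=> [/= Ha /bigI_ord H]; split => //.
by apply: eq_from_tnth => i; rewrite /Svec tnth_mktuple; exact: H.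
Qed.

Lemma Cset_WA n (a : n.-tuple bool) (c : n.-tuple nat) : (measurable : set (set TWA)) (Cset n a c).
Proof.
rewrite Cset_eq; apply: measurableI.
  apply: (mpre (mA_WA n)); rewrite tuple_set1.
  by apply: bigsetI_measurable => i _; apply: mpre; [exact: measurable_tnth|].
apply: bigsetI_measurable => i _; apply: (mpre (mW_WA i)).
exact: (mpre (Y := [set tnth c i]) mSfsnd I).
Qed.


Definition Gset n (B : 'I_n -> set V) (a : n.-tuple bool) (c : n.-tuple nat) :
  set (n.-tuple V * n.-tuple nat) :=
  [set x | (forall i, B i (tnth x.1 i) /\ (tnth x.1 i).1.2 = tnth a i) /\ x.2 = c].

Definition Gsys n : set (set (n.-tuple V * n.-tuple nat)) :=
  [set X | X = set0 \/ exists B a c, (forall i, measurable (B i)) /\ X = Gset n B a c].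

Lemma tuple1_meas m (T0 : measurableType default_measure_display) (a : m.-tuple T0) :
  (forall x : T0, measurable [set x]) -> measurable [set a].
Proof.
move=> h; rewrite tuple_set1; apply: bigsetI_measurable => i _.
exact: (mpre (measurable_tnth i) (h _)).
Qed.

Lemma Gset_meas n B a c : (forall i, measurable (B i)) -> measurable (Gset n B a c).
Proof.
move=> mB.
have -> : Gset n B a c = (\big[setI/setT]_(i < n) (fun x : n.-tuple V * n.-tuple nat
     => tnth x.1 i) @^-1` (B i `&` [set v : V | v.1.2 = tnth a i]))
     `&` (snd @^-1` [set c]).
  apply/seteqP; split => x.
    by move=> [H1 H2]; split => //; apply/bigI_ord => i; exact: H1.
  by move=> [/bigI_ord H1 H2]; split.
apply: measurableI; last first.
  by apply: (mpre measurable_snd); apply: tuple1_meas.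
apply: bigsetI_measurable => i _.
apply: (mpre (measurableT_comp (measurable_tnth i) measurable_fst)).
apply: measurableI => //.
exact: (mpre (Y := [set tnth a i]) (measurableT_comp measurable_snd measurable_fst) I).
Qed.

Lemma Gsys_setI n : setI_closed (Gsys n).
Proof.
move=> X1 X2 [->|[B1 [a1 [c1 [mB1 ->]]]]]; first by left; rewrite set0I.
move=> [->|[B2 [a2 [c2 [mB2 ->]]]]]; first by left; rewrite setI0.
have [/andP[/eqP e1 /eqP e2]|ne] := boolP ((a1 == a2) && (c1 == c2)).
  right; exists (fun i => B1 i `&` B2 i), a1, c1; split.
    by move=> i; apply: measurableI.
  subst a2 c2; apply/seteqP; split => x.
    by move=> [[H1 H2] [H3 H4]]; split => // i; have [? ?] := H1 i; have [? ?] := H3 i.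
  by move=> [H1 H2]; split; split => // i; have [[? ?] ?] := H1 i.
left; apply/seteqP; split => // x [[H1 H2] [H3 H4]]; move: ne.
have -> : a1 = a2 by apply: eq_from_tnth => i; rewrite -(H1 i).2 (H3 i).2.
by rewrite -H2 H4 !eqxx.
Qed.

Lemma Gsys_union n (X : set (n.-tuple V * n.-tuple nat))
  (Q : n.-tuple bool -> n.-tuple nat -> set (n.-tuple V * n.-tuple nat)) :
  (forall a c, <<s Gsys n >> (Q a c)) ->
  (forall x, X x <-> exists a c, Q a c x) -> <<s Gsys n >> X.
Proof.
move=> HQ HX.
have -> : X = \bigcup_m (match unpickle m with Some p => Q p.1 p.2 | None => set0 end).
  apply/seteqP; split => x.
    move=> /HX [a [c Hx]]; exists (pickle (a, c)) => //.
    by rewrite pickleK.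
  move=> [m _]; case: (unpickle m) => [[a c]|] //= Hx.
  by apply/HX; exists a, c.
apply: sigma_algebra_bigcup => m; case: (unpickle m) => [[a c]|] /=; first exact: HQ.
exact: sigma_algebra0.
Qed.

Lemma Gsys_gen n :
  (measurable : set (set (n.-tuple V * n.-tuple nat))) = <<s Gsys n >>.
Proof.
apply/seteqP; split; last first.
  apply: smallest_sub; first exact: sigma_algebra_measurable.
  by move=> X [->|[B [a [c [mB ->]]]]]; [exact: measurable0|exact: Gset_meas].
have -> : (measurable : set (set (n.-tuple V * n.-tuple nat))) =
  g_sigma_preimageU fst snd by [].
apply: smallest_sub; first exact: smallest_sigma_algebra.
rewrite subUset; split.
  move=> _ [M mM <-]; rewrite setTI.
  pose K := [set M : set (n.-tuple V) | <<s Gsys n >> (fst @^-1` M)].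
  suff : (g_sigma_preimage (fun i (x : n.-tuple V) => tnth x i)) `<=` K by apply.
  apply: smallest_sub.
    split.
    - by rewrite /K /= preimage_set0; exact: sigma_algebra0.
    - move=> Y; rewrite /K /= => HY.
      have -> : fst @^-1` (setT `\` Y) = setT `\` (fst @^-1` Y) :> set (n.-tuple V * n.-tuple nat).
        by apply/seteqP; split => x.
      exact: sigma_algebraCD.
    - move=> F HF; rewrite /K /= preimage_bigcup.
      exact: sigma_algebra_bigcup.
  move=> Y /bigU_seq [i [_ [Z mZ <-]]]; rewrite /K /= setTI.
  apply: (Gsys_union n _ (fun a c => Gset n (fun j => if j == i then Z else setT) a c)).
    move=> a c; apply: sub_sigma_algebra; right.
    exists (fun j => if j == i then Z else setT), a, c; split => //.
    by move=> j; case: ifP.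
  move=> x; split.
    move=> Hx; exists [tuple (tnth x.1 j).1.2 | j < n], x.2.
    split => // j; rewrite tnth_mktuple; split => //.
    by case: eqP => // ->.
  by move=> [a [c [H1 H2]]] /=; have := (H1 i).1; rewrite eqxx.
move=> _ [M _ <-]; rewrite setTI.
apply: (Gsys_union n _ (fun a c => if pselect (M c) then Gset n (fun j => setT) a c else set0)).
  move=> a c; destruct (pselect (M c)) => /=; last exact: sigma_algebra0.
  apply: sub_sigma_algebra; right; exists (fun j => setT), a, c; split => //.
move=> x; split.
  move=> Hx; exists [tuple (tnth x.1 j).1.2 | j < n], x.2.
  destruct (pselect (M x.2)) => //=; split => // j; rewrite tnth_mktuple; split => //.
by move=> [a [c]]; destruct (pselect (M c)) => //= -[_ ->].
Qed.


Lemma cancel_fin (x y r : \bar R) : x \is a fin_num -> y \is a fin_num ->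
  r \is a fin_num -> r != 0%E -> (x * r = y * r)%E -> x = y.
Proof.
move: x y r => [x||] [y||] [r||] //= _ _ _; rewrite eqe => r0.
rewrite -!EFinM => h; have h2 := EFin_inj h; by rewrite (mulIf r0 h2).
Qed.

Hypothesis HindW : mutual_indep P predT (fun i => preim_sys (W i)).
Hypothesis HlawW : forall i, same_law P (W i) (W 0%N).
Hypothesis HcondA : forall n, cond_indep_disc P (preim_sys (fun t => [tuple W i t | i < n]))
                               (preim_sys (A n)) (Svec Sf W n).
Hypothesis HindWst : mutual_indep P (fun p : nat * nat => (1 <= p.2 <= Sc)%N)
                 (fun p => preim_sys (Wst p.1 p.2)).
Hypothesis HlawWst : forall i s, (1 <= s <= Sc)%N -> forall B, measurable B ->
     (P (Wst i s @^-1` B) * P ((fun t => Sf (W 0%N t).2) @^-1` [set s])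
      = P (W 0%N @^-1` B `&` (fun t => Sf (W 0%N t).2) @^-1` [set s]))%E.
Hypothesis Hindep : indep2 P
    (gen_sys [set p : nat * nat | (1 <= p.2 <= Sc)%N] (fun p => preim_sys (Wst p.1 p.2)))
    (gen_sys setT (fun x : nat + nat =>
       match x with inl i => preim_sys (W i) | inr n => preim_sys (A n) end)).

Lemma P_bigW n (D : 'I_n -> set U) : (forall i, measurable (D i)) ->
  P (\big[setI/setT]_(i < n) W i @^-1` D i) = (\prod_(i < n) P (W 0%N @^-1` D i))%E.
Proof.
move=> mD.
rewrite (indep_big _ _ _ _ _ _ _ _ (fun i : 'I_n => val i) _ HindW val_inj) //.
  by apply: eq_bigr => i _; apply: HlawW.
by move=> i; exists (D i).
Qed.

Lemma P_bigWst n (sig : nat -> {perm 'I_n}) (c : n.-tuple nat) (D : 'I_n -> set U) :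
  (forall i, (1 <= tnth c i <= Sc)%N) -> (forall i, measurable (D i)) ->
  P (\big[setI/setT]_(i < n) Wst (sig (tnth c i) i) (tnth c i) @^-1` D i) =
  (\prod_(i < n) P (Wst (sig (tnth c i) i) (tnth c i) @^-1` D i))%E.
Proof.
move=> cR mD.
apply: (indep_big _ _ _ _ _ _ _ _ (fun i : 'I_n => (val (sig (tnth c i) i), tnth c i))
   (fun i => Wst (sig (tnth c i) i) (tnth c i) @^-1` D i) HindWst).
- move=> i j [/val_inj e1 e2]; move: e1; rewrite e2; exact: perm_inj.
- by move=> i; exact: cR.
- by move=> i; exists (D i).
Qed.


Section fixn.
Variables (n : nat) (sig : nat -> {perm 'I_n}).

Definition ff (t : T) := (Xstar Sf W A Sc Wst sig t, Svec Sf W n t).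
Definition gg (t : T) := (Xobs W A n t, Svec Sf W n t).

Lemma Svec_tnth t i : tnth (Svec Sf W n t) i = Sf (W i t).2.
Proof. by rewrite /Svec tnth_mktuple. Qed.

Lemma ff_pre B a c : ff @^-1` Gset n B a c =
  Cset n a c `&` \big[setI/setT]_(i < n)
     Wst (sig (tnth c i) i) (tnth c i) @^-1` (hx (tnth a i) @^-1` B i).
Proof.
apply/seteqP; split => t.
  move=> [H1 H2]; rewrite /ff /= in H1 H2.
  have H2' : forall i : 'I_n, Sf (W i t).2 = tnth c i.
    by move=> i; rewrite -Svec_tnth H2.
  have Ha : A n t = a.
    by apply: eq_from_tnth => i; have := (H1 i).2; rewrite tnth_Xstar.
  split; first by split.
  apply/bigI_ord => i /=; have := (H1 i).1; rewrite tnth_Xstar Ha H2'.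
  by [].
move=> [[Ha H2] /bigI_ord H1]; split => //= i.
have H2' : Sf (W i t).2 = tnth c i by rewrite -Svec_tnth H2.
rewrite tnth_Xstar Ha H2'; split => //.
exact: H1.
Qed.

Lemma gg_pre B a c : gg @^-1` Gset n B a c =
  A n @^-1` [set a] `&` \big[setI/setT]_(i < n)
     W i @^-1` (hx (tnth a i) @^-1` B i `&` [set w | Sf w.2 = tnth c i]).
Proof.
apply/seteqP; split => t.
  move=> [H1 H2]; rewrite /gg /= in H1 H2.
  have H2' : forall i : 'I_n, Sf (W i t).2 = tnth c i.
    by move=> i; rewrite -Svec_tnth H2.
  have Ha : A n t = a.
    by apply: eq_from_tnth => i; have := (H1 i).2; rewrite tnth_Xobs.
  split; first by [].
  apply/bigI_ord => i /=; have := (H1 i).1; rewrite tnth_Xobs Ha.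
  by split => //; exact: H2'.
move=> [/= Ha /bigI_ord H1]; split => [i|].
  by rewrite tnth_Xobs Ha; have [] := H1 i.
by apply: eq_from_tnth => i; rewrite Svec_tnth; have [] := H1 i.
Qed.

Lemma G_case B a c : (forall i, measurable (B i)) ->
  measurable (ff @^-1` Gset n B a c) /\ measurable (gg @^-1` Gset n B a c) /\
  P (ff @^-1` Gset n B a c) = P (gg @^-1` Gset n B a c).
Proof.
move=> mB.
have mDp i : measurable (hx (tnth a i) @^-1` B i) := mpre (hx_meas _) (mB i).
have mSi i : measurable [set w : U | Sf w.2 = tnth c i] :=
  mpre (Y := [set tnth c i]) mSfsnd I.
have mC : measurable (Cset n a c) := WA_sub _ (Cset_WA n a c).
have mF : measurable (ff @^-1` Gset n B a c).
  rewrite ff_pre; apply: measurableI => //.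
  by apply: bigsetI_measurable => i _; exact: (mpre (mWst _ _) (mDp i)).
have ma : measurable [set a] by apply: tuple1_meas.
have mG : measurable (gg @^-1` Gset n B a c).
  rewrite gg_pre; apply: measurableI; first exact: (mpre (mA n) ma).
  apply: bigsetI_measurable => i _.
  exact: (mpre (mW _) (measurableI _ _ (mDp i) (mSi i))).
split; first exact: mF.
split; first exact: mG.
set SC := Svec Sf W n @^-1` [set c].
have SCe : SC = \big[setI/setT]_(i < n) W i @^-1` [set w | Sf w.2 = tnth c i].
  apply/seteqP; split => t.
    by move=> /= Ht; apply/bigI_ord => i /=; rewrite -Svec_tnth Ht.
  move=> /bigI_ord Ht; apply: eq_from_tnth => i /=; rewrite Svec_tnth.
  exact: Ht.
have mSC : measurable SC.
  by rewrite SCe; apply: bigsetI_measurable => i _; exact: (mpre (mW _) (mSi i)).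
have PSC : P SC = (\prod_(i < n) P (W 0%N @^-1` [set w | Sf w.2 = tnth c i]))%E.
  by rewrite SCe; exact: P_bigW.
have fsub : ff @^-1` Gset n B a c `<=` SC by move=> t [_ H].
have gsub : gg @^-1` Gset n B a c `<=` SC by move=> t [_ H].
have [P0|P0] := eqVneq (P SC) 0%E.
  have h1 : P (ff @^-1` Gset n B a c) = 0%E.
    apply/eqP; rewrite -measure_le0 -P0; apply: le_measure => //; rewrite inE //.
  have h2 : P (gg @^-1` Gset n B a c) = 0%E.
    apply/eqP; rewrite -measure_le0 -P0; apply: le_measure => //; rewrite inE //.
  by rewrite h1 h2.
have cR : forall i, (1 <= tnth c i <= Sc)%N.
  move=> i; apply/negPn/negP => hi; move: P0; rewrite PSC (bigD1 i) //=.
  have -> : [set w : U | Sf w.2 = tnth c i] = set0.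
    by apply/seteqP; split => // w /= e; move: hi; rewrite -e SfR.
  by rewrite preimage_set0 measure0 mul0e eqxx.
set FW := \big[setI/setT]_(i < n)
     Wst (sig (tnth c i) i) (tnth c i) @^-1` (hx (tnth a i) @^-1` B i).
have hFW : (measurable : set (set TWst)) FW.
  apply: bigsetI_measurable => i _.
  exact: (mpre (mWst_W _ (tnth c i) (cR i)) (mDp i)).
have Pf : P (ff @^-1` Gset n B a c) = (P FW * P (Cset n a c))%E.
  by rewrite ff_pre setIC; apply: Hindep; [exact: hFW|exact: Cset_WA].
have PFW : P FW = (\prod_(i < n) P (Wst (sig (tnth c i) i) (tnth c i) @^-1`
                      (hx (tnth a i) @^-1` B i)))%E.
  exact: P_bigWst.
pose Dt := \big[setI/setT]_(i < n) (fun x : n.-tuple U => tnth x i) @^-1` (hx (tnth a i) @^-1` B i).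
have mDt : measurable Dt.
  by apply: bigsetI_measurable => i _; exact: (mpre (measurable_tnth i) (mDp i)).
pose E1 := (fun t => [tuple W i t | i < n]) @^-1` Dt.
pose E2 := A n @^-1` [set a].
have := HcondA n c E1 E2 _ _.
move=> /(_ (ex_intro2 _ _ Dt mDt erefl) (ex_intro2 _ _ [set a] ma erefl)).
have e1 : E1 `&` E2 `&` Svec Sf W n @^-1` [set c] = gg @^-1` Gset n B a c.
  rewrite gg_pre; apply/seteqP; split => t.
    move=> [[/bigI_ord H1 H2] H3]; split => //; apply/bigI_ord => i /=.
    split; first by have := H1 i; rewrite /= tnth_mktuple.
    by rewrite -Svec_tnth H3.
  move=> [H2 /bigI_ord H1]; split; last first.
    by apply: eq_from_tnth => i; rewrite Svec_tnth; have [] := H1 i.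
  split => //; apply/bigI_ord => i /=; rewrite tnth_mktuple.
  by have [] := H1 i.
have e2 : E1 `&` Svec Sf W n @^-1` [set c] = \big[setI/setT]_(i < n)
     W i @^-1` (hx (tnth a i) @^-1` B i `&` [set w | Sf w.2 = tnth c i]).
  apply/seteqP; split => t.
    move=> [/bigI_ord H1 H3]; apply/bigI_ord => i /=.
    split; first by have := H1 i; rewrite /= tnth_mktuple.
    by rewrite -Svec_tnth H3.
  move=> /bigI_ord H1; split; last first.
    by apply: eq_from_tnth => i; rewrite Svec_tnth; have [] := H1 i.
  apply/bigI_ord => i /=; rewrite tnth_mktuple.
  by have [] := H1 i.
have e3 : E2 `&` Svec Sf W n @^-1` [set c] = Cset n a c by [].
rewrite e1 e2 e3 P_bigW; last by move=> i; exact: measurableI.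
have -> : (\prod_(i < n) P (W 0%N @^-1` (hx (tnth a i) @^-1` B i `&`
                                 [set w | Sf w.2 = tnth c i])) =
    \prod_(i < n) (P (Wst (sig (tnth c i) i) (tnth c i) @^-1` (hx (tnth a i) @^-1` B i)) *
                   P (W 0%N @^-1` [set w | Sf w.2 = tnth c i])))%E.
  apply: eq_bigr => i _; symmetry; exact: (HlawWst _ _ (cR i) _ (mDp i)).
rewrite big_split /= -PFW -PSC => Hc.
apply: (cancel_fin _ _ (P SC)); rewrite ?fin_num_measure //.
by rewrite Pf Hc muleAC.
Qed.

Lemma same_law_part : same_law P ff gg.
Proof.
move=> B mB.
pose Q (S : set (n.-tuple V * n.-tuple nat)) := measurable (ff @^-1` S) /\
  measurable (gg @^-1` S) /\ P (ff @^-1` S) = P (gg @^-1` S).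
suff : Q B by case=> _ [].
apply: (@dynkin_induction _ _ (Gsys n) Q (Gsys_gen n) (Gsys_setI n)); last first.
  by rewrite -Gsys_gen.
- move=> F mF tF QF; rewrite /Q !preimage_bigcup.
  have m1 m : measurable (ff @^-1` F m) by case: (QF m).
  have m2 m : measurable (gg @^-1` F m) by case: (QF m) => _ [].
  split; first by apply: bigcupT_measurable.
  split; first by apply: bigcupT_measurable.
  rewrite !measure_bigcup //.
  + by apply: eq_eseriesr => m _; case: (QF m) => _ [].
  + move=> i j _ _ [x [h1 h2]]; apply: tF => //; first [by exists (ff x) | by exists (gg x)].
  + move=> i j _ _ [x [h1 h2]]; apply: tF => //; first [by exists (ff x) | by exists (gg x)].
- move=> S mS [m1 [m2 e]]; rewrite /Q -!preimage_setC.
  split; first exact: measurableC.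
  split; first exact: measurableC.
  by rewrite !probability_setC // e.
- move=> X [->|[B' [a [c [mB' ->]]]]]; last exact: G_case.
  by rewrite /Q !preimage_set0; split; [|split].
- by rewrite /Q !preimage_setT; split; [|split].
Qed.

Lemma cond_part : cond_indep_disc P (preim_sys (Xobs W A n))
  (preim_sys (Xstar Sf W A Sc Wst sig)) (fun t => (A n t, Svec Sf W n t)).
Proof.
move=> [a s] E1 E2 [B1 mB1 <-] [B2 mB2 <-].
set Cc := (fun t => (A n t, Svec Sf W n t)) @^-1` [set (a, s)].
have CcE : Cc = Cset n a s.
  apply/seteqP; split => t /=; first by case=> ha hs; split. by case=> ha hs; rewrite /Cc /= ha hs.
have [/forallP sR | nR] := boolP [forall i, (1 <= tnth s i <= Sc)%N]; last first.
  have -> : Cc = set0.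
    apply/seteqP; split => // t; rewrite CcE => -[_ Hs].
    by move/forallPn: nR => [i]; rewrite -Hs Svec_tnth SfR.
  by rewrite !setI0 measure0 !mule0.
pose Xa t := [tuple hx (tnth a i) (W i t) | i < n].
pose Xs t := [tuple hx (tnth a i) (Wst (sig (tnth s i) i) (tnth s i) t) | i < n].
have mXa : measurable_fun (setT : set TWA) (Xa : TWA -> _).
  apply/measurable_fun_tnthP => i.
  have -> : (@tnth n V ^~ i \o Xa) = hx (tnth a i) \o W i.
    by apply/funext => t; rewrite /= tnth_mktuple.
  exact: measurableT_comp (hx_meas _) (mW_WA i).
have mXs : measurable_fun (setT : set TWst) (Xs : TWst -> _).
  apply/measurable_fun_tnthP => i.
  have -> : (@tnth n V ^~ i \o Xs) = hx (tnth a i) \o Wst (sig (tnth s i) i) (tnth s i).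
    by apply/funext => t; rewrite /= tnth_mktuple.
  exact: measurableT_comp (hx_meas _) (mWst_W _ _ (sR i)).
have eXa t : Cc t -> Xobs W A n t = Xa t.
  rewrite CcE => -[Ha _]; apply: eq_from_tnth => i.
  by rewrite tnth_Xobs tnth_mktuple Ha.
have eXs t : Cc t -> Xstar Sf W A Sc Wst sig t = Xs t.
  rewrite CcE => -[Ha Hs]; apply: eq_from_tnth => i.
  by rewrite tnth_Xstar tnth_mktuple Ha -Svec_tnth Hs.
set F := Xs @^-1` B2.
set G1 := Xa @^-1` B1 `&` Cc.
have hF : (measurable : set (set TWst)) F := mpre mXs mB2.
have hC : (measurable : set (set TWA)) Cc by rewrite CcE; exact: Cset_WA.
have hG1 : (measurable : set (set TWA)) G1 := measurableI _ _ (mpre mXa mB1) hC.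
have e1 : Xobs W A n @^-1` B1 `&` Xstar Sf W A Sc Wst sig @^-1` B2 `&` Cc = F `&` G1.
  apply/seteqP; split => t.
    by move=> [[h1 h2] hc]; rewrite /F /G1 /= -(eXa t hc) -(eXs t hc).
  by move=> [h2 [h1 hc]]; split => //; split => /=; rewrite ?(eXa t hc) ?(eXs t hc).
have e2 : Xobs W A n @^-1` B1 `&` Cc = G1.
  apply/seteqP; split => t.
    by move=> [h1 hc]; split => //; rewrite /= -(eXa t hc).
  by move=> [h1 hc]; split => //; rewrite /= (eXa t hc).
have e3 : Xstar Sf W A Sc Wst sig @^-1` B2 `&` Cc = F `&` Cc.
  apply/seteqP; split => t.
    by move=> [h1 hc]; split => //; rewrite /F /= -(eXs t hc).
  by move=> [h1 hc]; split => //; rewrite /= (eXs t hc).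
rewrite e1 e2 e3 (Hindep _ _ hF hG1) (Hindep _ _ hF hC).
by rewrite -muleA muleCA.
Qed.

End fixn.

End model.

Theorem lemma7 (R : realType) (d : measure_display) (T : measurableType d)
  (P : probability T R) (k Sc : nat) (Sf : k.-tuple R -> nat) (pi : nat -> R)
  (W : nat -> T -> R * R * k.-tuple R) (A : forall n, T -> n.-tuple bool)
  (Wst : nat -> nat -> T -> R * R * k.-tuple R) :
  (* Q0 (the law of W_i) belongs to the model Q: it has a density w.r.t. a
     product of sigma-finite measures ... *)
  (exists (mu0 mu1 : {measure set R -> \bar R})
          (muZ : {measure set (k.-tuple R) -> \bar R})
          (f : R * R * k.-tuple R -> \bar R),
      sigma_finite setT mu0 /\ sigma_finite setT mu1 /\ sigma_finite setT muZ /\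
      measurable_fun setT f /\ (forall x, 0 <= f x)%E /\
      forall B, measurable B ->
        P (W 0%N @^-1` B) = (\int[(mu0 \x mu1) \x muZ]_(x in B) f x)%E) ->
  (* ... and E[Y(0)^2], E[Y(1)^2] are finite *)
  (\int[P]_t (((W 0%N t).1.1) ^+ 2)%:E < +oo)%E ->
  (\int[P]_t (((W 0%N t).1.2) ^+ 2)%:E < +oo)%E ->
  (* the known stratification function and target proportions *)
  measurable_fun setT Sf ->
  (forall z, (1 <= Sf z <= Sc)%N) ->
  (forall s, (1 <= s <= Sc)%N -> 0 < pi s < 1) ->
  (* W_1, W_2, ... i.i.d. with law Q0 *)
  (forall i, measurable_fun setT (W i)) ->
  mutual_indep P predT (fun i => preim_sys (W i)) ->
  (forall i, same_law P (W i) (W 0%N)) ->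
  (* treatment vectors A_n, conditionally independent of (W_1..W_n) given S_n *)
  (forall n, measurable_fun setT (A n)) ->
  (forall n, cond_indep_disc P (preim_sys (fun t => [tuple W i t | i < n]))
                               (preim_sys (A n)) (Svec Sf W n)) ->
  (* N_n(1,s)/N_n(s) -> pi(s) in probability *)
  (forall s, (1 <= s <= Sc)%N -> forall eps : R, 0 < eps ->
     (fun n => P [set t | eps < `| (N1 Sf W A n s t)%:R / (Ns Sf W n s t)%:R - pi s |])
       @ \oo --> 0%E) ->
  (* coupling: W_i(s) independent across (i,s), with W_i(s) ~ W | S(Z) = s under Q0 *)
  (forall i s, measurable_fun setT (Wst i s)) ->
  mutual_indep P (fun p : nat * nat => (1 <= p.2 <= Sc)%N)
                 (fun p => preim_sys (Wst p.1 p.2)) ->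
  (forall i s, (1 <= s <= Sc)%N -> forall B, measurable B ->
     (P (Wst i s @^-1` B) * P ((fun t => Sf (W 0%N t).2) @^-1` [set s])
      = P (W 0%N @^-1` B `&` (fun t => Sf (W 0%N t).2) @^-1` [set s]))%E) ->
  (* W* independent of W and of all A_n *)
  indep2 P
    (gen_sys [set p : nat * nat | (1 <= p.2 <= Sc)%N] (fun p => preim_sys (Wst p.1 p.2)))
    (gen_sys setT (fun x : nat + nat =>
       match x with inl i => preim_sys (W i) | inr n => preim_sys (A n) end)) ->
  (* conclusion, for every n and every choice of permutations sigma_{n,s} *)
  forall (n : nat) (sig : nat -> {perm 'I_n}),
    same_law P (fun t => (Xstar Sf W A Sc Wst sig t, Svec Sf W n t))
               (fun t => (Xobs W A n t, Svec Sf W n t)) /\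
    cond_indep_disc P (preim_sys (Xobs W A n))
                      (preim_sys (Xstar Sf W A Sc Wst sig))
                      (fun t => (A n t, Svec Sf W n t)).
Proof.
move=> _ _ _ mSf SfR _ mW HindW HlawW mA HcondA _ mWst HindWst HlawWst Hindep n sig.
split.
- exact: (same_law_part _ _ _ _ _ _ _ _ _ _ SfR mSf mW mA mWst HindW HlawW HcondA HindWst HlawWst Hindep n sig).
- exact: (cond_part _ _ _ _ _ _ _ _ _ _ SfR mSf Hindep n sig).
Qed.
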